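(* Let $n\ge 2$ and let $d=(d_1,\dots,d_n)$ with $d_1=\tfrac34$, $d_2=\tfrac14$ and $d_i=0$ for $3\le i\le n$. Then for every simple game $\chi$ on $N=\{1,\dots,n\}$, $$\|\mathcal{BZ}(\chi)-d\|_1=\sum_{i=1}^n\left|\mathcal{BZ}(\chi,i)-d_i\right|\ge\frac19.$$
   Context: A simple game on $N=\{1,\dots,n\}$ is a monotone Boolean function $\chi:2^N\to\{0,1\}$ with $\chi(\emptyset)=0$ and $\chi(N)=1$. An $i$-swing is a set $U\subseteq N\setminus\{i\}$ with $\chi(U)=0$ and $\chi(U\cup\{i\})=1$. The Banzhaf index is $\mathcal{BZ}(\chi,i)=\eta_i/\sum_{k=1}^n\eta_k$, where $\eta_i$ is the number of $i$-swings, and $\mathcal{BZ}(\chi)=(\mathcal{BZ}(\chi,1),\dots,\mathcal{BZ}(\chi,n))$. *)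

(* Defs.v *)
(* Players N = {1,...,n} are represented by 'I_n
   (paper's player k corresponds to the ordinal k-1). *)
From HB Require Import structures.
From mathcomp Require Import all_boot all_order all_algebra.
Set Implicit Arguments. Unset Strict Implicit. Unset Printing Implicit Defensive.
Import Order.TTheory GRing.Theory Num.Theory.
Local Open Scope ring_scope.

Definition simple_game (n : nat) (chi : {set 'I_n} -> bool) : Prop :=
  [/\ (forall U V : {set 'I_n}, U \subset V -> chi U -> chi V),
      chi set0 = false & chi [set: 'I_n] = true].

Definition swings (n : nat) (chi : {set 'I_n} -> bool) (i : 'I_n) : nat :=
  #|[set U : {set 'I_n} | [&& i \notin U, ~~ chi U & chi (i |: U)]]|.

Definition banzhaf (n : nat) (chi : {set 'I_n} -> bool) (i : 'I_n) : rat :=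
  (swings chi i)%:R / (\sum_(k < n) swings chi k)%:R.

Definition dvec (n : nat) (i : 'I_n) : rat :=
  if val i == 0%N then 3%:R / 4%:R
  else if val i == 1%N then 1%:R / 4%:R else 0.

(* Main.v *)
Require Import Defs.
From HB Require Import structures.
From mathcomp Require Import all_boot all_order all_algebra.
From mathcomp Require Import zify ring lra.
Set Implicit Arguments. Unset Strict Implicit. Unset Printing Implicit Defensive.
Import Order.TTheory GRing.Theory Num.Theory.
Section Cube.
Variable T : finType.

Lemma sub1 (k : T) (K R : {set T}) : k \notin K ->
  (R \subset K) = (R \subset k |: K) && (k \notin R).
Proof. by move=> kK; rewrite -subsetD1 setU1K. Qed.

Lemma sumU1 (k : T) (K : {set T}) (F : {set T} -> nat) : k \notin K ->
  \sum_(R : {set T} | R \subset k |: K) F R = \sum_(R : {set T} | R \subset K) (F R + F (k |: R)).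
Proof.
move=> kK.
rewrite big_split /= (bigID (fun R : {set T} => k \in R)) /= addnC.
congr (_ + _).
  by apply: eq_bigl => R; rewrite (sub1 _ kK).
rewrite (reindex_onto (fun R : {set T} => k |: R) (fun R : {set T} => R :\ k)) /=; last first.
  by move=> R /andP [_ kR]; rewrite setD1K.
apply: eq_bigl => R; rewrite setU11 andbT (sub1 _ kK).
case kR: (k \in R) => /=.
  rewrite andbF; apply/negbTE; rewrite negb_and; apply/orP; right; apply/eqP => e.
  have h := setD11 k (k |: R); rewrite e in h; by rewrite h in kR.
rewrite setU1K; last by rewrite kR.
by rewrite eqxx andbT subUset sub1set setU11 andbT.
Qed.

End Cube.
Section Iso.
Variable T : finType.
Implicit Types (f : {set T} -> bool) (K : {set T}).

Definition cnt f K := \sum_(R : {set T} | R \subset K) (f R : nat).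
Definition bnd f K := \sum_(j in K) \sum_(R : {set T} | R \subset K)
   ((j \notin R) && (f R != f (j |: R)) : nat).

Lemma cnt0 f : cnt f set0 = f set0.
Proof.
rewrite /cnt (eq_bigl (fun R => R == set0)) ?big_pred1_eq // => R.
by rewrite subset0.
Qed.

Lemma cntU1 f k K : k \notin K -> cnt f (k |: K) = cnt f K + cnt (fun R => f (k |: R)) K.
Proof. by move=> kK; rewrite /cnt sumU1 // big_split. Qed.

Lemma notin_sub k K (R : {set T}) : k \notin K -> R \subset K -> k \notin R.
Proof. by move=> kK sR; apply/negP => /(subsetP sR); rewrite (negPf kK). Qed.

Lemma bndU1 f k K : k \notin K -> bnd f (k |: K) =
  \sum_(R : {set T} | R \subset K) (f R != f (k |: R) : nat)
  + bnd f K + bnd (fun R => f (k |: R)) K.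
Proof.
move=> kK; rewrite /bnd big_setU1 //= -addnA; congr (_ + _).
  rewrite sumU1 //; apply: eq_bigr => R sR.
  by rewrite (notin_sub kK sR) setU11 /= addn0.
rewrite -big_split /=; apply: eq_bigr => j jK.
rewrite sumU1 // -big_split /=; apply: eq_bigr => R sR; congr (_ + _).
have jk : j != k by apply: contraNneq kK => <-.
by rewrite in_setU1 (negPf jk) /= setUCA.
Qed.

Lemma iso_n n : forall f K, #|K| = n ->
  2 * cnt f K * cnt (fun R => ~~ f R) K <= (cnt f K + cnt (fun R => ~~ f R) K) * bnd f K.
Proof.
elim: n => [|n IH] f K cK.
  by move/cards0_eq: cK => ->; rewrite !cnt0; case: (f set0).
have : 0 < #|K| by rewrite cK.
case/card_gt0P => k kK.
have kK' : k \notin K :\ k by rewrite setD11.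
have cK' : #|K :\ k| = n by move: cK; rewrite (cardsD1 k K) kK add1n => -[].
rewrite -(setD1K kK) !cntU1 // bndU1 //.
set K' := K :\ k.
set f1 := fun R => f (k |: R).
have IH0 := IH f K' cK'.
have IH1 := IH f1 K' cK'.
set D := \sum_(R : {set T} | R \subset K') _.
set a0 := cnt f K'; set a1 := cnt f1 K'.
set b0 := cnt (fun R => ~~ f R) K'; set b1 := cnt (fun R => ~~ f1 R) K'.
have h0 : a0 + b0 = \sum_(R : {set T} | R \subset K') 1.
  by rewrite /a0 /b0 /cnt -big_split; apply: eq_bigr => R _; case: (f R).
have h1 : a1 + b1 = \sum_(R : {set T} | R \subset K') 1.
  by rewrite /a1 /b1 /cnt -big_split; apply: eq_bigr => R _; case: (f1 R).
have d0 : a0 <= a1 + D.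
  rewrite /a0 /a1 /D /cnt -big_split /=; apply: leq_sum => R _.
  by rewrite /f1; case: (f R); case: (f (k |: R)).
have d1 : a1 <= a0 + D.
  rewrite /a0 /a1 /D /cnt -big_split /=; apply: leq_sum => R _.
  by rewrite /f1; case: (f R); case: (f (k |: R)).
move: IH0 IH1 h0 h1 d0 d1; rewrite -/a0 -/b0 -/a1 -/b1.
move: (\sum_(R : {set T} | R \subset K') 1) => h.
move=> IH0 IH1 h0 h1 d0 d1.
fold f1.
nia.
Qed.

End Iso.
Local Open Scope ring_scope.
Lemma final_ineq (e1 e2 c a a' b b' Bu Bv : rat) :
  0 <= e1 -> 0 <= e2 -> 0 <= a -> 0 <= a' -> 0 <= b -> 0 <= b' -> 0 <= Bu -> 0 <= Bv ->
  0 < a + a' ->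
  e1 + 2 * b = e2 + 2 * a -> e1 + e2 <= 2 * (a + a') -> a + a' = b + b' ->
  2 * a * a' <= (a + a') * Bu -> 2 * b * b' <= (b + b') * Bv -> Bu + Bv <= c ->
  (e1 + e2 + c) / 9 <= `|e1 - 3 / 4 * (e1 + e2 + c)| + `|e2 - 1/4 * (e1 + e2 + c)| + c.
Proof.
move=> he1 he2 ha ha' hb hb' hBu hBv hM E1 E2 E3 I1 I2 I3.
set M := a + a'.
have hc : 2 * (a - b) * (M - (a - b)) <= c * M /\ b <= a \/ a < b.
  case: (lerP b a) => hab; last by right.
  left; split => //.
  have : 2 * a * a' + 2 * b * b' <= c * M.
    have h3 : M * (Bu + Bv) <= M * c by rewrite ler_wpM2l // ltW.
    rewrite -E3 in I2; rewrite /M in h3 *; lra.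
  have hba := mulr_ge0 hb ha'.
  have eb' : b' = M - b by rewrite /M E3; ring.
  rewrite eb' /M; rewrite /M in hba; nra.
have n1 := ler_norm (e1 - 3 / 4 * (e1 + e2 + c)).
have n2 := ler_norm (e2 - 1 / 4 * (e1 + e2 + c)).
have n1' : -(e1 - 3 / 4 * (e1 + e2 + c)) <= `|e1 - 3 / 4 * (e1 + e2 + c)|.
  by rewrite -normrN ler_norm.
have n2' : -(e2 - 1 / 4 * (e1 + e2 + c)) <= `|e2 - 1 / 4 * (e1 + e2 + c)|.
  by rewrite -normrN ler_norm.
have hn1 := normr_ge0 (e1 - 3 / 4 * (e1 + e2 + c)).
case: hc => [[hc hab]|hab]; last by lra.
case: (lerP (25 * (a - b)) (14 * M)) => hd.
  have hx : 0 <= (a - b) * (14 * M - 25 * (a - b)) by apply: mulr_ge0; lra.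
  have h : 22 * (a - b) * M <= 25 * c * M by nra.
  have : 22 * (a - b) <= 25 * c by rewrite -(ler_pM2r hM).
  lra.
have hdM : a - b <= M by rewrite /M; lra.
have hx : 0 <= (25 * (a - b) - 14 * M) * (M - (a - b)) by apply: mulr_ge0; lra.
have h : 0 <= (36 * (a - b) - 26 * M + 41 * c) * M by nra.
have : 0 <= 36 * (a - b) - 26 * M + 41 * c by rewrite -(ler_pM2r hM) mul0r.
rewrite /M; lra.
Qed.
Lemma card_sum (X : finType) (P : pred X) : #|[set x | P x]| = (\sum_x (P x : nat))%N.
Proof.
rewrite -sum1_card big_mkcond /=; apply: eq_bigr => x _; rewrite inE; by case: (P x).
Qed.

Lemma aux (x y x' y' : bool) (A B : nat) : (x -> x') -> (y -> y') ->
  ((x != x') + (y != y') <= A + (~~x && x') + (~~y && y') + B)%N.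
Proof. by case: x; case: x'; case: y; case: y' => //= h1 h2; try lia; move: (h1 isT) || move: (h2 isT). Qed.

Unset Implicit Arguments.
Theorem mainTheorem7 (n : nat) (hn : (2 <= n)%N) (chi : {set 'I_n} -> bool)
  (hchi : simple_game chi) :
  1%:R / 9%:R <= \sum_(i < n) `|banzhaf chi i - dvec i|.
Proof.
case: hchi => mono chi0 chiT.
have n0 : (0 < n)%N by apply: leq_trans hn.
pose i1 : 'I_n := Ordinal n0.
pose i2 : 'I_n := Ordinal hn.
have i12 : i1 != i2 by [].
pose K := ~: [set i1; i2].
have i2K : i2 \notin K by rewrite !inE eqxx orbT.
have i1K : i1 \notin i2 |: K by rewrite !inE eqxx.
have eT : [set: 'I_n] = i1 |: (i2 |: K).
  by apply/setP => x; rewrite !inE; case: (x == i1); case: (x == i2).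
have sumall : forall F : {set 'I_n} -> nat, (\sum_U F U =
   \sum_(R : {set 'I_n} | R \subset K) (F R + F (i1 |: R) + F (i2 |: R) + F (i1 |: (i2 |: R))))%N.
  move=> F; rewrite (eq_bigl (fun U : {set 'I_n} => U \subset i1 |: (i2 |: K))); last first.
    by move=> U; rewrite -eT subsetT.
  rewrite (@sumU1 _ i1 _ F i1K) (@sumU1 _ i2 K (fun R => F R + F (i1 |: R))%N i2K).
  by apply: eq_bigr => R _; rewrite !addnA.
have monoU : forall x R, chi R -> chi (x |: R) by move=> x R; apply: mono; apply: subsetU1.
have i1K' : i1 \notin K by rewrite !inE eqxx.
pose u R := chi (i1 |: R). pose v R := chi (i2 |: R).
pose w3 R := chi (i1 |: (i2 |: R)).
pose e1 := swings chi i1. pose e2 := swings chi i2.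
pose c := (\sum_(k in K) swings chi k)%N.
have He1 : e1 = (\sum_(R : {set 'I_n} | R \subset K)
     ((~~ chi R && u R : nat) + (~~ v R && w3 R)))%N.
  rewrite /e1 /swings card_sum sumall; apply: eq_bigr => R sR.
  rewrite (notin_sub i1K' sR) !in_setU1 eqxx (negPf i12) (notin_sub i1K' sR) /=.
  by rewrite !addn0.
have He2 : e2 = (\sum_(R : {set 'I_n} | R \subset K)
     ((~~ chi R && v R : nat) + (~~ u R && w3 R)))%N.
  rewrite /e2 /swings card_sum sumall; apply: eq_bigr => R sR.
  rewrite (notin_sub i2K sR) !in_setU1 eqxx eq_sym (negPf i12) (notin_sub i2K sR) /=.
  by rewrite !addn0 /w3 /u /v setUCA.
have Hk : forall k, k \in K -> (\sum_(R : {set 'I_n} | R \subset K)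
     (((k \notin R) && (u R != u (k |: R)) : nat) + ((k \notin R) && (v R != v (k |: R)))) <= swings chi k)%N.
  move=> k kK; rewrite /swings card_sum sumall; apply: leq_sum => R sR.
  have k1 : k != i1 by apply: contraNneq i1K' => <-.
  have k2 : k != i2 by apply: contraNneq i2K => <-.
  rewrite !in_setU1 (negPf k1) (negPf k2) /= /u /v.
  rewrite (setUCA [set k] [set i1] R) (setUCA [set k] [set i2] R).
  have m1 := monoU k (i1 |: R); have m2 := monoU k (i2 |: R).
  rewrite (setUCA [set k] [set i1] R) in m1; rewrite (setUCA [set k] [set i2] R) in m2.
  case: (k \in R) => //=.
  exact: aux.
have Hc : (bnd u K + bnd v K <= c)%N.
  rewrite /bnd /c -big_split /=; apply: leq_sum => k kK.
  by rewrite -big_split /=; apply: Hk.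
have Hm : forall R, [/\ chi R -> u R, chi R -> v R, u R -> w3 R & v R -> w3 R].
  move=> R; split; rewrite /u /v /w3; try exact: monoU.
  by rewrite setUCA; exact: monoU.
pose a := cnt u K. pose a' := cnt (fun R => ~~ u R) K.
pose b := cnt v K. pose b' := cnt (fun R => ~~ v R) K.
have E1 : (e1 + 2 * b = e2 + 2 * a)%N.
  rewrite He1 He2 /b /a /cnt !mul2n -!addnn -!big_split /=; apply: eq_bigr => R _.
  case: (Hm R); case: (chi R); case: (u R); case: (v R); case: (w3 R) => //= *; lia.
have E2 : (e1 + e2 <= 2 * (a + a'))%N.
  rewrite He1 He2 /a' /a /cnt mul2n -addnn -!big_split /=; apply: leq_sum => R _.
  case: (Hm R); case: (chi R); case: (u R); case: (v R); case: (w3 R) => //= *; lia.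
have E3 : (a + a' = b + b')%N.
  rewrite /a /a' /b /b' /cnt -!big_split /=; apply: eq_bigr => R _.
  by case: (u R); case: (v R).
have hM : (0 < a + a')%N.
  rewrite /a /a' /cnt -big_split /= (bigD1 set0) ?sub0set //=.
  by case: (u set0).
have I1 := iso_n u (erefl #|K|).
have I2 := iso_n v (erefl #|K|).
have Htot : (\sum_(k < n) swings chi k = e1 + e2 + c)%N.
  rewrite (bigD1 i1) //= (bigD1 i2) //= addnA; congr (_ + _).
  by rewrite /c; apply: eq_bigl => k; rewrite !inE negb_or.
have dK : forall k, k \in K -> dvec k = 0.
  move=> k; rewrite !inE negb_or => /andP [k1 k2].
  rewrite /dvec; case: eqP => [h|_].
    by move: k1; have -> : k = i1 by apply: val_inj.
  case: eqP => [h|_] //.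
  by move: k2; have -> : k = i2 by apply: val_inj.
pose S : rat := (e1 + e2 + c)%:R.
have Hsum : \sum_(i < n) `|banzhaf chi i - dvec i| =
   `|e1%:R / S - 3%:R / 4%:R| + `|e2%:R / S - 1%:R / 4%:R| + c%:R / S.
  rewrite (bigD1 i1) //= (bigD1 i2) //= addrA.
  rewrite /banzhaf Htot -/S /dvec /=; congr (_ + _).
  rewrite /c natr_sum mulr_suml; apply: eq_big => k.
    by rewrite !inE negb_or.
  move=> /andP [k1 k2].
  have kK : k \in K by rewrite !inE negb_or k1 k2.
  have := dK k kK; rewrite /dvec => ->.
  by rewrite subr0 ger0_norm // divr_ge0.
rewrite Hsum.
have [hS0|hS0] := eqVneq (e1 + e2 + c)%N 0%N.
  have z1 : e1 = 0%N by lia.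
  have z2 : e2 = 0%N by lia.
  have z3 : c = 0%N by lia.
  rewrite /S hS0 z1 z2 z3 !mul0r !sub0r !normrN.
  by rewrite !ger0_norm ?divr_ge0 // addr0.
have hS : 0 < S by rewrite /S ltr0n lt0n.
rewrite -(ler_pM2r hS) mulrDl mulrDl.
have key : forall (y t : rat), `|y / S - t| * S = `|y - t * S|.
  move=> y t; have -> : y - t * S = (y / S - t) * S by rewrite mulrBl mulfVK ?gt_eqF.
  by rewrite normrM (gtr0_norm hS).
rewrite !key mulfVK ?gt_eqF //.
have F := @final_ineq e1%:R e2%:R c%:R a%:R a'%:R b%:R b'%:R (bnd u K)%:R (bnd v K)%:R
  (ler0n _ _) (ler0n _ _) (ler0n _ _) (ler0n _ _) (ler0n _ _) (ler0n _ _) (ler0n _ _) (ler0n _ _).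
have T1 : 0 < (a + a')%:R :> rat by rewrite ltr0n.
have T2 : (e1 + 2 * b)%:R = (e2 + 2 * a)%:R :> rat by rewrite E1.
have T3 : (e1 + e2)%:R <= (2 * (a + a'))%:R :> rat by rewrite ler_nat.
have T4 : (a + a')%:R = (b + b')%:R :> rat by rewrite E3.
have T5 : (2 * a * a')%:R <= ((a + a') * bnd u K)%:R :> rat by rewrite ler_nat.
have T6 : (2 * b * b')%:R <= ((b + b') * bnd v K)%:R :> rat by rewrite ler_nat.
have T7 : (bnd u K + bnd v K)%:R <= c%:R :> rat by rewrite ler_nat.
rewrite !natrD !natrM in T1 T2 T3 T4 T5 T6 T7.
have := F T1 ltac:(lra) ltac:(lra) ltac:(lra) ltac:(nra) ltac:(nra) ltac:(lra).
rewrite /S !natrD.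
lra.
Qed.
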